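(* Let $q$ be a prime power and let $n\ge 3$ be an odd integer. Let $d\in D_n$, let $\beta$ be a primitive $d$-th root of unity over $\mathbb{F}_{q^2}$, and let $f_\beta(x)=\prod_{i=0}^{n-1}(x-\beta^{q^{2i}})$. Then $f_\beta(x)$ is a SCRIM polynomial over $\mathbb{F}_{q^2}$ of degree $n$ and order $d$.
   Context: $D_n$ denotes the set of all positive divisors of $q^n+1$ that do not divide $q^k+1$ for any integer $0\le k<n$. For $f(x)\in\mathbb{F}_{q^2}[x]$ of degree $m$ with $f(0)\neq0$, the reciprocal is $f^*(x)=x^m f(0)^{-1}f(1/x)$, the conjugate of $g(x)=\sum g_ix^i$ is $\overline{g(x)}=\sum g_i^q x^i$, and the conjugate-reciprocal is $f^\dagger(x)=\overline{f^*(x)}$. A polynomial $f$ with $f(0)\ne 0$ is SCRIM if $f=f^\dagger$ and $f$ is irreducible and monic. The order of $f$ is the smallest positive integer $s$ such that $f(x)$ divides $x^s-1$. *)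

(* Defs.v *)
From HB Require Import structures.
From mathcomp Require Import all_boot all_order all_algebra all_field.
Set Implicit Arguments. Unset Strict Implicit. Unset Printing Implicit Defensive.
Import GRing.Theory.
Local Open Scope ring_scope.

Definition in_Dn (q n d : nat) : bool :=
  [&& 0 < d, d %| q ^ n + 1 & [forall k : 'I_n, ~~ (d %| q ^ k + 1)]]%N.

Section PolyDefs.
Variable F : fieldType.

(* reciprocal f^*(x) = x^m f(0)^{-1} f(1/x), m = deg f *)
Definition reciprocal (f : {poly F}) : {poly F} :=
  (f`_0)^-1 *: \poly_(i < size f) f`_((size f).-1 - i).

Definition conjp (q : nat) (g : {poly F}) : {poly F} :=
  \poly_(i < size g) (g`_i ^+ q).

Definition conj_reciprocal (q : nat) (f : {poly F}) : {poly F} :=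
  conjp q (reciprocal f).

Definition SCRIM (q : nat) (f : {poly F}) : Prop :=
  [/\ f`_0 != 0, f = conj_reciprocal q f, irreducible_poly f & f \is monic].

Definition poly_order_is (f : {poly F}) (s : nat) : Prop :=
  [/\ (0 < s)%N, f %| 'X^s - 1 &
      forall t : nat, (0 < t)%N -> f %| 'X^t - 1 -> (s <= t)%N].
End PolyDefs.

(* Main.v *)
Require Import Defs.
From HB Require Import structures.
From mathcomp Require Import all_boot all_order all_algebra all_field.
From mathcomp Require Import zify.
Import GRing.Theory.
Local Open Scope ring_scope.

Section Frob.
Variables (R : comNzRingType) (P : nat) (HP : [pchar R].-nat P).
Definition frobn of [pchar R].-nat P := fun x : R => x ^+ P.
Lemma frobn_nmod : nmod_morphism (frobn HP).
Proof.
split; rewrite /frobn; first by rewrite expr0n eqn0Ngt (andP HP).1.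
by move=> x y; rewrite exprDn_pchar.
Qed.
Lemma frobn_monoid : monoid_morphism (frobn HP).
Proof. by split; rewrite /frobn ?expr1n // => x y; rewrite exprMn. Qed.
HB.instance Definition _ := GRing.isNmodMorphism.Build R R (frobn HP) frobn_nmod.
HB.instance Definition _ := GRing.isMonoidMorphism.Build R R (frobn HP) frobn_monoid.
End Frob.

Lemma recip_horner (K : fieldType) (a : {poly K}) y : y != 0 ->
  (reciprocal a).[y] = (a`_0)^-1 * (y ^+ (size a).-1 * a.[y^-1]).
Proof.
move=> y0; rewrite /reciprocal hornerZ horner_poly; congr (_ * _).
rewrite horner_coef mulr_sumr (reindex_inj rev_ord_inj) /=.
apply: eq_bigr => i _.
have hi : (i < size a)%N := ltn_ord i.
have -> : ((size a).-1 - (size a - i.+1) = i)%N by lia.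
have -> : ((size a).-1 = (size a - i.+1) + i)%N by lia.
by rewrite exprD exprVn -!mulrA [y ^+ i * _]mulrCA mulfV ?expf_neq0 // mulr1 mulrC.
Qed.


Lemma recip_size (K : fieldType) (a : {poly K}) : a`_0 != 0 ->
  size (reciprocal a) = size a /\ reciprocal a \is monic.
Proof.
move=> a0.
have sa : (0 < size a)%N by rewrite lt0n size_poly_eq0; apply: contraNneq a0 => ->; rewrite coef0.
have Hc : ((size a).-1 - (size a).-1 = 0)%N by rewrite subnn.
have E : size (\poly_(i < size a) a`_((size a).-1 - i)) = size a.
  by apply: size_poly_eq; rewrite Hc.
rewrite /reciprocal size_scale ?invr_eq0 // E; split => //.
rewrite monicE lead_coefZ /lead_coef E coef_poly prednK // leqnn Hc mulVf //.
Qed.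

Lemma recip_map (K K' : fieldType) (phi : {rmorphism K -> K'}) (a : {poly K}) :
  map_poly phi (reciprocal a) = reciprocal (map_poly phi a).
Proof.
rewrite /reciprocal map_polyZ fmorphV coef_map size_map_poly; congr (_ *: _).
apply/polyP => i; rewrite coef_map !coef_poly.
case h: (i < size a)%N; last by rewrite raddf0. have -> : ((size a).-1 - i < size a)%N by lia. done. Qed.



Lemma img_F (F : finFieldType) (L : fieldExtType F) (c : L) :
  c ^+ #|F| = c -> exists x : F, c = in_alg L x.
Proof.
move=> Hc; case: (boolP [exists x : F, c == in_alg L x]) => [/existsP[x /eqP ->]|/existsPn Hn]; first by exists x.
exfalso.
have cF : (1 < #|F|)%N by rewrite (cardD1 0) (cardD1 1) !inE oner_neq0.
pose p : {poly L} := 'X^#|F| - 'X.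
have sp : size p = #|F|.+1.
  by rewrite /p size_addl ?size_polyXn // size_opp size_polyX ltnS.
have := @max_poly_roots _ p (c :: map (in_alg L) (enum F)).
rewrite -size_poly_eq0 sp /= size_map -cardE ltnn => H; suff : false by []; apply: H => //.
  rewrite /root /p !hornerE Hc subrr eqxx /=; apply/allP => z /mapP [x _ ->].
  by rewrite /root !hornerE -rmorphXn /= expf_card subrr.
rewrite map_inj_uniq ?enum_uniq ?andbT; last exact: fmorph_inj.
apply/mapP => -[x _ Ex]; by have := Hn x; rewrite Ex eqxx.
Qed.
Section Orbit.
Variables (L : fieldType) (q n d : nat) (beta : L).
Hypotheses (Hn : (0 < n)%N) (Hnodd : odd n) (d0 : (0 < d)%N)
  (Hdiv : (d %| q ^ n + 1)%N) (Hnot : forall k, (k < n)%N -> ~~ (d %| q ^ k + 1)%N)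
  (Hb : d.-primitive_root beta).

Definition H t := beta ^+ (q ^ t).

Lemma beta0 : beta != 0.
Proof.
apply/eqP => b0; have := prim_expr_order Hb; rewrite b0 expr0n.
by case: d d0 => // ? _ /eqP; rewrite eq_sym oner_eq0.
Qed.

Lemma HD a b : H (a + b) = H a ^+ (q ^ b).
Proof. by rewrite /H expnD exprM. Qed.

Lemma H0 : H 0 = beta.
Proof. by rewrite /H expn0 expr1. Qed.

Lemma Hn1 : H n = beta^-1.
Proof.
have : beta ^+ (q ^ n + 1) = 1 by apply/eqP; rewrite -(prim_order_dvd Hb).
rewrite exprD expr1 => E.
by rewrite /H -[LHS]mulr1 -(mulfV beta0) mulrA E mul1r.
Qed.

Lemma H2n : H (2 * n) = beta.
Proof. by rewrite mul2n -addnn HD Hn1 exprVn -/(H n) Hn1 invrK. Qed.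

Lemma HV a : H (n + a) = (H a)^-1.
Proof. by rewrite HD Hn1 exprVn. Qed.

Lemma PERgen e (He : H (2 * e) = beta) c b : H (2 * (c * e + b)) = H (2 * b).
Proof.
have Hc : forall c, H (2 * (c * e)) = beta.
  elim => [|c' IH]; first by rewrite mul0n muln0 H0.
  by rewrite (mulSn c' e) mulnDr addnC HD IH -/(H (2 * e)) He.
by rewrite mulnDr HD Hc.
Qed.

Lemma PER m : H (2 * m) = H (2 * (m %% n)).
Proof. by rewrite {1}(divn_eq m n) PERgen // H2n. Qed.

Lemma Hmin t : H (2 * t) = beta -> (n %| t)%N.
Proof.
have exP : exists t, (0 < t)%N && (H (2 * t) == beta) by exists n; rewrite Hn H2n eqxx.
case: (ex_minnP exP) => e /andP [e0 /eqP He] emin.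
have en : (e <= n)%N by apply: emin; rewrite Hn H2n eqxx.
have edn : (e %| n)%N.
  apply/eqP; case E: (n %% e)%N => [//|r].
  have : (e <= n %% e)%N by apply: emin; rewrite E /= -E -(@PERgen e He (n %/ e)%N) -divn_eq H2n eqxx.
  by rewrite leqNgt ltn_pmod.
have ene : e = n.
  apply/eqP; rewrite eqn_leq en /=; rewrite leqNgt; apply/negP => lten.
  have [c Ec] : exists c, n = (e * c)%N by exists (n %/ e)%N; rewrite mulnC divnK.
  have oc : odd c by move: Hnodd; rewrite Ec oddM => /andP [].
  have Ec2 : n = (2 * (c./2 * e + 0) + e)%N.
    by rewrite Ec -{1}(odd_double_half c) oc addn0; lia.
  have Hne : H n = H e by rewrite Ec2 HD PERgen // H0.
  have : beta ^+ (q ^ e + 1) == 1.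
    by rewrite exprD expr1 -/(H e) -Hne Hn1 mulVf // beta0.
  by rewrite -(prim_order_dvd Hb) (negPf (Hnot e lten)).
move=> Ht; apply/eqP; case E: (t %% n)%N => [//|r].
have : (e <= t %% n)%N by apply: emin; rewrite E /= -E -(@PERgen n H2n (t %/ n)%N) -divn_eq Ht eqxx.
by rewrite ene leqNgt ltn_pmod.
Qed.


Definition rs := [seq H (2 * i) | i <- iota 0 n].
Definition fb : {poly L} := \prod_(i < n) ('X - (H (2 * i))%:P).

Lemma Ef : fb = \prod_(z <- rs) ('X - z%:P).
Proof. rewrite /fb /rs big_map. have -> : iota 0 n = index_iota 0 n by rewrite /index_iota subn0. by rewrite big_mkord. Qed.

Lemma uniq_rs : uniq rs.
Proof.
rewrite map_inj_in_uniq ?iota_uniq // => i j; rewrite !mem_iota !add0n => /= ilt jlt.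
wlog ij : i j ilt jlt / (i <= j)%N.
  move=> W E; case: (leqP i j) => [|/ltnW] h; first exact: W.
  by apply/esym/W.
move=> E; apply/eqP; rewrite eqn_leq ij /=; rewrite leqNgt; apply/negP => lt.
have E2 : H (2 * (j - i)) = beta.
  have -> : H (2 * (j - i)) = H (2 * j) ^+ (q ^ (2 * (n - i))).
    by rewrite -HD -(@PERgen n H2n 1) mul1n; congr H; lia.
  by rewrite -E -HD -H2n; congr H; lia.
have := Hmin (j - i) E2; rewrite /dvdn modn_small; lia.
Qed.

Lemma rootH m : root fb (H (2 * m)).
Proof.
rewrite Ef root_prod_XsubC PER; apply/mapP; exists (m %% n)%N => //.
by rewrite mem_iota add0n ltn_pmod.
Qed.

Lemma size_fb : size fb = n.+1.
Proof. by rewrite Ef size_prod_XsubC size_map size_iota. Qed.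

Lemma monic_fb : fb \is monic.
Proof. by rewrite Ef monic_prod_XsubC. Qed.

Lemma KEY h : (forall m, root h (H (2 * m))) -> fb %| h.
Proof.
move=> Hr; have [||q' ->] := @uniq_roots_prod_XsubC _ h rs.
- by apply/allP => z /mapP [i _ ->].
- by rewrite uniq_rootsE uniq_rs.
by rewrite Ef dvdp_mull.
Qed.

Lemma EQ h : h \is monic -> size h = n.+1 -> (forall m, root h (H (2 * m))) -> h = fb.
Proof.
move=> mh sh Hr; apply/esym/eqP; rewrite -eqp_monic ?monic_fb //.
by rewrite -dvdp_size_eqp ?KEY // size_fb sh.
Qed.

End Orbit.
Ltac clia := repeat match goal with H : _ |- _ => clear H end; lia.

Theorem mainTheorem8
  (q : nat) (Hq : exists p k : nat, prime p /\ (0 < k)%N /\ q = (p ^ k)%N)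
  (F : finFieldType) (HF : #|F| = (q ^ 2)%N)
  (L : fieldExtType F)
  (n : nat) (Hn3 : (3 <= n)%N) (Hnodd : odd n)
  (d : nat) (Hd : in_Dn q n d)
  (beta : L) (Hbeta : d.-primitive_root beta) :
  let f_beta : {poly L} :=
    \prod_(i < n) ('X - (beta ^+ (q ^ (2 * i)))%:P) in
  exists g : {poly F},
    [/\ map_poly (in_alg L) g = f_beta,
        SCRIM q g,
        size g = n.+1
      & poly_order_is g d].
Proof.
move=> f.
have Hn0 : (0 < n)%N by lia.
case/and3P: Hd => d0 Hdiv /forallP Hnot'.
have Hnot : forall k, (k < n)%N -> ~~ (d %| q ^ k + 1)%N.
  by move=> k kn; exact: (Hnot' (Ordinal kn)).
have Efb : f = fb L q n beta by [].
have PER' := PER L q n d beta d0 Hdiv Hbeta.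
have HV' := HV L q n d beta d0 Hdiv Hbeta.
have rootH' := rootH L q n d beta Hn0 d0 Hdiv Hbeta.
have KEY' := KEY L q n d beta Hn0 Hnodd d0 Hdiv Hnot Hbeta.
have EQ' := EQ L q n d beta Hn0 Hnodd d0 Hdiv Hnot Hbeta.
have b0 := beta0 L d beta d0 Hbeta.
case: Hq => p [k [pp [k0 Eq]]].
have pF : p \in [pchar F].
  by apply: (@card_finPcharP F p (k * 2)) => //; rewrite HF Eq -expnM.
have natF : forall m, [pchar F].-nat (q ^ m)%N.
  by move=> m; rewrite (eq_pnat _ (pcharf_eq pF)) Eq -expnM pnatX (pnat_id pp).
have natL : forall m, [pchar L].-nat (q ^ m)%N.
  by move=> m; rewrite (eq_pnat _ (pchar_lalg L)) natF.
have natFq : [pchar F].-nat q by have := natF 1%N; rewrite expn1.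
have natLq : [pchar L].-nat q by have := natL 1%N; rewrite expn1.
pose fr2 := @frobn _ _ (natL 2%N).
have frH : forall a, fr2 (H L q beta a) = H L q beta (a + 2) by move=> a; rewrite /fr2 /frobn HD.
have frF : forall c : F, fr2 (in_alg L c) = in_alg L c.
  by move=> c; rewrite /fr2 /frobn -rmorphXn /= -HF expf_card.
have Ff : map_poly fr2 f = f.
  rewrite Efb; apply: EQ'.
  - by rewrite map_monic monic_fb.
  - by rewrite size_map_poly size_fb.
  - move=> m; have -> : H L q beta (2 * m) = fr2 (H L q beta (2 * (m + n - 1))).
      rewrite frH; have -> : (2 * (m + n - 1) + 2 = 2 * (m + n))%N by lia.
      by rewrite PER' [RHS]PER' modnDr.
    by rewrite fmorph_root rootH'.
have fOver : f \is a polyOver 1%VS.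
  apply/polyOverP => i.
  have : (f`_i) ^+ #|F| = f`_i by rewrite HF -{2}Ff coef_map.
  case/img_F => x ->; exact: rpredZ (memv_line 1).
case/polyOver1P: fOver => g Eg.
have sg : size g = n.+1 by rewrite -(size_map_poly (in_alg L)) -Eg Efb size_fb.
have mg : g \is monic by rewrite -(map_monic (in_alg L)) -Eg Efb monic_fb.
have f0 : f`_0 != 0.
  have : ~~ root f 0.
    rewrite Efb Ef root_prod_XsubC; apply/mapP => -[i _ /esym/eqP].
    by rewrite /H expf_eq0 (negPf b0) andbF.
  by rewrite /root horner_coef0.
have g0 : g`_0 != 0 by move: f0; rewrite Eg coef_map fmorph_eq0.
have rb : root f beta by move: (rootH' 0%N); rewrite muln0 H0 Efb.
exists g; split => //.
- split => //.
  + apply: (@map_poly_inj _ _ (in_alg L)); rewrite /conj_reciprocal.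
    have -> : conjp q (reciprocal g) = map_poly (@frobn _ _ natFq) (reciprocal g) by [].
    rewrite -map_poly_comp.
    have -> : map_poly (in_alg L \o @frobn _ _ natFq) (reciprocal g) =
              map_poly (@frobn _ _ natLq) (map_poly (in_alg L) (reciprocal g)).
      have E : (in_alg L \o @frobn _ _ natFq) =1 (@frobn _ _ natLq \o in_alg L).
        by move=> c; rewrite /= /frobn; exact: (rmorphXn (in_alg L) q c).
      by rewrite (eq_map_poly E) map_poly_comp.
    rewrite recip_map -Eg.
    have [srf mrf] := recip_size _ _ f0.
    have [u Eu] : exists u, n = (2 * u + 1)%N.
      by exists n./2; move: (odd_double_half n); rewrite Hnodd -mul2n; move: (n./2) => w; clia.
    apply/esym; apply: EQ'.
    * by rewrite map_monic.
    * by rewrite size_map_poly srf Efb size_fb.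
    move=> m; pose y := H L q beta (2 * m + 4 * u + 1).
    have y0 : y != 0 by rewrite /y /H expf_neq0.
    have -> : H L q beta (2 * m) = @frobn _ _ natLq y.
      rewrite /frobn /y -[X in _ = _ ^+ X]expn1 -HD.
      have -> : (2 * m + 4 * u + 1 + 1 = 2 * (m + n))%N by move: Eu; clia.
      by rewrite PER' [RHS]PER' modnDr.
    rewrite fmorph_root /root recip_horner // /y -HV'.
    have -> : (n + (2 * m + 4 * u + 1) = 2 * (m + 3 * u + 1))%N by move: Eu; clia.
    have := rootH' (m + 3 * u + 1)%N; rewrite -Efb /root => /eqP ->.
    by rewrite !mulr0.
  + split; first by rewrite sg.
    move=> h sh hg.
    have hfd0 : map_poly (in_alg L) h %| f by rewrite Eg dvdp_map.
    have hfd := hfd0; rewrite Efb Ef in hfd.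
    case: (@dvdp_prod_XsubC _ _ (rs L q n beta) id _ hfd) => ms Hm.
    have [z zm] : exists z, z \in mask ms (rs L q n beta).
      case E: mask => [|z s]; last by exists z; rewrite mem_head.
      move: Hm; rewrite E big_nil => /eqp_size; rewrite size_map_poly size_poly1.
      by move/eqP; rewrite (negPf sh).
    have rz : root (map_poly (in_alg L) h) z by rewrite (eqp_root Hm) root_prod_XsubC.
    have := mem_mask zm; case/mapP => j; rewrite mem_iota add0n => /= jn Ez.
    have Fh : map_poly fr2 (map_poly (in_alg L) h) = map_poly (in_alg L) h.
      by rewrite -map_poly_comp; apply: eq_map_poly => c /=; exact: frF.
    have prop : forall t, root (map_poly (in_alg L) h) (H L q beta (2 * j + 2 * t)).
      elim => [|t IH]; first by rewrite muln0 addn0 -Ez.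
      have -> : (2 * j + 2 * t.+1 = (2 * j + 2 * t) + 2)%N by clia.
      by rewrite -frH -{1}Fh fmorph_root.
    have allr : forall m', root (map_poly (in_alg L) h) (H L q beta (2 * m')).
      move=> m'; rewrite PER'; have := prop (m' %% n + n - j)%N.
      have -> : (2 * j + 2 * (m' %% n + n - j) = 2 * (m' %% n + n))%N.
        by move: (ltn_pmod m' Hn0) jn; clia.
      by rewrite PER' modnDr modn_mod.
    have fh := KEY' _ allr; rewrite -Efb in fh.
    have : map_poly (in_alg L) h %= map_poly (in_alg L) g by rewrite -Eg /eqp hfd0 fh.
    by rewrite eqp_map.
- split => // [|t t0].
    rewrite -(dvdp_map (in_alg L)) -Eg rmorphB /= map_polyXn rmorph1 Efb.
    apply: KEY' => m.
    by rewrite /root !hornerE /H -exprM mulnC exprM (prim_expr_order Hbeta) expr1n subrr.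
  move=> Hdv; rewrite -(dvdp_map (in_alg L)) -Eg rmorphB /= map_polyXn rmorph1 in Hdv.
  have := root_dvdp Hdv rb.
  rewrite /root !hornerE subr_eq0 -(prim_order_dvd Hbeta) => /dvdn_leq; apply; exact t0.
Qed.
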